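(* Let $H$ be an $r$-graph. Then $\mathrm{sd}\,\mathsf{B}_{\mathrm{edge}}(H)$ $S_r$-collapses onto its $S_r$-subcomplex $\Delta(i(P_{K_r^r,H}))$.
   Context: An $r$-graph $H$ consists of a vertex set $V(H)$ and a set $E(H)$ of $r$-element subsets of $V(H)$; an edge $\{v_1,\dots,v_r\}$ is written $v_1\cdots v_r$. $P_{K_r^r,H}$ is the poset of maps $f:\{1,\dots,r\}\to 2^{V(H)}\setminus\{\varnothing\}$ such that for every choice $x_j\in f(j)$ the $x_j$ are distinct and $x_1\cdots x_r\in E(H)$, ordered by $f\le g$ iff $f(j)\subseteq g(j)$ for all $j$; $S_r$ acts on it on the right by $f\sigma=f\circ\sigma$. $\mathsf{B}_{\mathrm{edge}}(H)$ is the simplicial complex whose vertices are tuples $(v_1,\dots,v_r)\in V(H)^r$ with $v_1\cdots v_r\in E(H)$ and whose simplices are the sets $F$ of such tuples with $\mathrm{pr}_1(F),\dots,\mathrm{pr}_r(F)$ pairwise disjoint and $x_1\cdots x_r\in E(H)$ for every choice $x_j\in\mathrm{pr}_j(F)$; $S_r$ acts on the right by $(v_1,\dots,v_r)\sigma=(v_{\sigma(1)},\dots,v_{\sigma(r)})$. $\mathcal F(\mathsf{B}_{\mathrm{edge}}(H))$ is its poset of nonempty simplices, $\Delta(P)$ denotes the order complex of a poset $P$ (simplices = chains), and $\mathrm{sd}\,\mathsf{B}_{\mathrm{edge}}(H)=\Delta(\mathcal F(\mathsf{B}_{\mathrm{edge}}(H)))$ with the induced $S_r$-action. The $S_r$-equivariant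 injective poset map $i:P_{K_r^r,H}\to\mathcal F(\mathsf{B}_{\mathrm{edge}}(H))$ is $i(\varphi)=\varphi(1)\times\cdots\times\varphi(r)$, so $\Delta(i(P_{K_r^r,H}))$ is an $S_r$-subcomplex of $\mathrm{sd}\,\mathsf{B}_{\mathrm{edge}}(H)$. For a simplicial $G$-complex $\mathsf K$: a facet is a maximal simplex; a simplex $\sigma$ is free if it is a proper face of exactly one facet $\varphi_\sigma$; a collection of free simplices is independently free if no two distinct members have a common coface. For free $\sigma$ with $\dim\varphi_\sigma=\dim\sigma+1$ and $\sigma G$ independently free, an elementary $G$-collapse replaces $\mathsf K$ by the subcomplex of simplices having no $\sigma g$ ($g\in G$) as a face. $\mathsf K$ $G$-collapses onto a $G$-subcomplex $\mathsf K'$ if a finite sequence of elementary $G$-collapses leads from $\mathsf K$ to $\mathsf K'$. *)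

(* Defs.v *)
From mathcomp Require Import all_boot fingroup perm.
Set Implicit Arguments. Unset Strict Implicit. Unset Printing Implicit Defensive.

(* ---------- Generic notions for simplicial G-complexes ----------
   A (finite) simplicial complex with vertex set in a finType X is
   represented by its set of nonempty simplices K : {set {set X}}. *)

Definition is_facet (X : finType) (K : {set {set X}}) (s : {set X}) : bool :=
  (s \in K) && [forall t in K, (s \subset t) ==> (t == s)].

Definition facets_over (X : finType) (K : {set {set X}}) (s : {set X}) :=
  [set p in K | is_facet K p && (s \proper p)].

Definition is_free (X : finType) (K : {set {set X}}) (s : {set X}) : bool :=
  (s \in K) && (#|facets_over K s| == 1).

Definition common_coface (X : finType) (K : {set {set X}}) (s1 s2 : {set X}) :=
  [exists t in K, (s1 \subset t) && (s2 \subset t)].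

Definition indep_free (X : finType) (K : {set {set X}}) (C : {set {set X}}) :=
  [forall s in C, is_free K s] &&
  [forall s1 in C, forall s2 in C, (s1 != s2) ==> ~~ common_coface K s1 s2].

Definition sact (X : finType) (G : finGroupType) (act : X -> G -> X)
  (s : {set X}) (g : G) : {set X} := [set act x g | x in s].

Definition simplex_orbit (X : finType) (G : finGroupType) (act : X -> G -> X)
  (s : {set X}) : {set {set X}} := [set sact act s g | g : G].

Definition elem_G_collapse (X : finType) (G : finGroupType) (act : X -> G -> X)
  (K : {set {set X}}) (s : {set X}) (K' : {set {set X}}) : Prop :=
  [/\ is_free K s,
      (exists p, facets_over K s = [set p] /\ #|p| = #|s|.+1),
      indep_free K (simplex_orbit act s) &
      K' = [set t in K | [forall g : G, ~~ (sact act s g \subset t)]]].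

Inductive G_collapses (X : finType) (G : finGroupType) (act : X -> G -> X)
  (K : {set {set X}}) : {set {set X}} -> Prop :=
| GC_refl : G_collapses act K K
| GC_step : forall K1 s K2, G_collapses act K K1 ->
    elem_G_collapse act K1 s K2 -> G_collapses act K K2.

Definition order_complex (Y : finType) (A : {set {set Y}}) : {set {set {set Y}}} :=
  [set c : {set {set Y}} | (c != set0) && (c \subset A) &&
     [forall a in c, forall b in c, (a \subset b) || (b \subset a)]].

Section Rgraph.
Variables (V : finType) (r : nat) (E : {set {set V}}).

Definition rtuple := {ffun 'I_r -> V}.

Definition is_edge_tuple (x : rtuple) : bool :=
  injectiveb x && ([set x j | j in 'I_r] \in E).

Definition proj (j : 'I_r) (F : {set rtuple}) : {set V} := [set (t : rtuple) j | t in F].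

Definition Bedge_face (F : {set rtuple}) : bool :=
  [&& F != set0,
      [forall t in F, is_edge_tuple t],
      [forall j : 'I_r, forall k : 'I_r, (j != k) ==> [disjoint proj j F & proj k F]] &
      [forall x : rtuple, [forall j, x j \in proj j F] ==> is_edge_tuple x]].

Definition Bedge_faces : {set {set rtuple}} := [set F | Bedge_face F].

Definition sd_Bedge := order_complex Bedge_faces.

Definition in_P (f : {ffun 'I_r -> {set V}}) : bool :=
  [forall j, f j != set0] &&
  [forall x : rtuple, [forall j, x j \in f j] ==> is_edge_tuple x].

Definition iP (f : {ffun 'I_r -> {set V}}) : {set rtuple} :=
  [set t : rtuple | [forall j, t j \in f j]].

Definition Delta_iP := order_complex [set iP f | f in [set f | in_P f]].

Definition tuple_act (t : rtuple) (g : {perm 'I_r}) : rtuple := [ffun j => t (g j)].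
Definition face_act (F : {set rtuple}) (g : {perm 'I_r}) : {set rtuple} :=
  [set tuple_act (t : rtuple) g | t in F].

End Rgraph.

(* Main.v *)
Require Import Defs.
From mathcomp Require Import all_boot fingroup perm zify.
Set Implicit Arguments. Unset Strict Implicit. Unset Printing Implicit Defensive.

Lemma GC_trans (X : finType) (G : finGroupType) (act : X -> G -> X) K1 K2 K3 :
  G_collapses act K2 K3 -> G_collapses act K1 K2 -> G_collapses act K1 K3.
Proof.
move=> h; elim: h => [//|Ka s Kb _ IH hel] h12.
exact: (GC_step (IH h12) hel).
Qed.

Section Gen.
Local Open Scope group_scope.
Variables (X : finType) (G : finGroupType) (act : X -> G -> X).
Hypothesis H1 : forall x, act x 1 = x.
Hypothesis H2 : forall x g h, act (act x g) h = act x (h * g).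

Lemma actK g : cancel (act^~ g) (act^~ g^-1).
Proof. by move=> x /=; rewrite H2 mulVg H1. Qed.
Lemma actKV g : cancel (act^~ g^-1) (act^~ g).
Proof. by move=> x /=; rewrite H2 mulgV H1. Qed.
Lemma inj_act g : injective (act^~ g).
Proof. exact: can_inj (actK g). Qed.

Lemma sactM (s : {set X}) g h : sact act (sact act s g) h = sact act s (h * g).
Proof. by rewrite /sact -imset_comp; apply: eq_imset => x /=; rewrite H2. Qed.
Lemma sact1 (s : {set X}) : sact act s 1 = s.
Proof. by rewrite /sact (eq_imset _ H1) imset_id. Qed.
Lemma sactK g (s : {set X}) : sact act (sact act s g) g^-1 = s.
Proof. by rewrite sactM mulVg sact1. Qed.
Lemma card_sact (s : {set X}) g : #|sact act s g| = #|s|.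
Proof. exact: card_imset (@inj_act g). Qed.
Lemma sactS (s t : {set X}) g : s \subset t -> sact act s g \subset sact act t g.
Proof. exact: imsetS. Qed.
Lemma sactSE (s t : {set X}) g : (sact act s g \subset sact act t g) = (s \subset t).
Proof.
apply/idP/idP; last exact: sactS.
by move=> /(sactS g^-1); rewrite !sactK.
Qed.
Lemma mem_sact x (s : {set X}) g : (act x g \in sact act s g) = (x \in s).
Proof. by rewrite /sact mem_imset //; apply: inj_act. Qed.

Lemma collapse_gen (n : nat) (K S : {set {set X}}) (key : {set X} -> nat) (f : {set X} -> X) :
 #|S| <= n ->
 (forall t g, t \in K -> sact act t g \in K) ->
 (forall s g, s \in S -> sact act s g \in S) ->
 (forall s g, s \in S -> key (sact act s g) = key s) ->
 (forall s, s \in S -> f s \notin s) ->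
 (forall s, s \in S -> s \in K) ->
 (forall s, s \in S -> f s |: s \in K) ->
 (forall s s', s \in S -> s' \in S -> s' \subset f s |: s -> s' = s \/ key s' < key s) ->
 (forall s t, s \in S -> t \in K -> s \subset t ->
    [\/ t = s, t = f s |: s | exists2 s', s' \in S & (key s < key s') && (s' \subset t)]) ->
 G_collapses act K [set t in K | [forall s in S, ~~ (s \subset t)]].
Proof.
have empty_case (K0 S0 : {set {set X}}) : S0 = set0 ->
    G_collapses act K0 [set t in K0 | [forall s in S0, ~~ (s \subset t)]].
  move=> ->; have -> : [set t in K0 | [forall s in (set0 : {set {set X}}), ~~ (s \subset t)]] = K0.
    by apply/setP => t; rewrite inE; case: (t \in K0) => //=; apply/forall_inP => s; rewrite inE.
  exact: GC_refl.
elim: n K S => [|n IH] K S hn HK HS Hkey Hfs HsK HpK Hanti Hco.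
  by apply: empty_case; apply/eqP; rewrite -cards_eq0 -leqn0.
case: (set_0Vmem S) => [/empty_case //| [s1 s1S]].
case: (arg_maxnP key s1S) => s0 s0S s0max.
set O0 := simplex_orbit act s0.
set K1 := [set t in K | [forall g : G, ~~ (sact act s0 g \subset t)]].
have maxk s : s \in S -> key s <= key s0 by move=> /s0max.
have Ofacts s : s \in O0 -> s \in S /\ key s = key s0.
  by case/imsetP => g _ ->; split; [apply: HS | apply: Hkey].
have free s : s \in S -> key s = key s0 -> facets_over K s = [set f s |: s].
  move=> sS ks; apply/setP => q; rewrite !inE.
  have nbig t : t \in K -> s \subset t -> t = s \/ t = f s |: s.
    move=> tK st; case: (Hco s t sS tK st) => [->|->|[s' s'S /andP[lt _]]]; [by left|by right|].
    by move: (maxk _ s'S); rewrite -ks leqNgt lt.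
  have fsp : f s \in f s |: s by rewrite setU11.
  have nsub : ~~ (f s |: s \subset s) by apply/negP => /subsetP/(_ _ fsp); apply/negP/Hfs.
  apply/idP/idP.
    case/andP => qK /andP[_ sq'].
    case: (nbig q qK (proper_sub sq')) => [eq|->//]; subst q.
    by rewrite properxx in sq'.
  move/eqP => ->; rewrite HpK //= properE subsetUr nsub !andbT /is_facet HpK //=.
  apply/forall_inP => t tK; apply/implyP => pt.
  case: (nbig t tK (subset_trans (subsetUr _ _) pt)) => [ets|->//].
  by subst t; rewrite (negbTE nsub) in pt.
have isfree s : s \in S -> key s = key s0 -> is_free K s.
  by move=> sS ks; rewrite /is_free HsK // free // cards1.
have elem : elem_G_collapse act K s0 K1.
  split.
  - exact: isfree.
  - exists (f s0 |: s0); split; [exact: free | by rewrite cardsU1 Hfs].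
  - rewrite /indep_free; apply/andP; split.
      by apply/forall_inP => s /Ofacts [sS ks]; apply: isfree.
    apply/forall_inP => a /Ofacts [aS ka]; apply/forall_inP => b /Ofacts [bS kb].
    apply/implyP => ab.
    apply/negP => /existsP [t /andP [tK /andP [hat hbt]]].
    have bpa : b \subset f a |: a.
      case: (Hco a t aS tK hat) => [eq|eq|[s' s'S /andP[lt _]]].
      + by subst; apply: subset_trans hbt (subsetUr _ _).
      + by subst.
      + by move: (maxk _ s'S); rewrite -ka leqNgt lt.
    case: (Hanti a b aS bS bpa) => [eq|lt]; first by rewrite eq eqxx in ab.
    by move: lt; rewrite ka kb ltnn.
  - by [].
set S1 := S :\: O0.
have s0O : s0 \in O0 by apply/imsetP; exists 1; rewrite ?inE ?sact1.
have hn1 : #|S1| <= n.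
  rewrite -ltnS; apply: leq_trans hn; apply: proper_card; apply/properP; split.
    exact: subsetDl.
  by exists s0 => //; rewrite inE s0O.
have helper s g : s \in S -> s \notin O0 -> ~~ (sact act s0 g \subset f s |: s).
  move=> sS sO; apply/negP => sub.
  case: (Hanti s _ sS (HS s0 g s0S) sub) => [eq|lt].
    by move: sO; rewrite -eq; apply/negP/negPn/imsetP; exists g.
  by move: lt; rewrite Hkey // ltnNge maxk.
have IH1 := IH K1 S1 hn1.
have -> : [set t in K | [forall s in S, ~~ (s \subset t)]] =
          [set t in K1 | [forall s in S1, ~~ (s \subset t)]].
  apply/setP => t; rewrite !inE; apply/idP/idP.
    case/andP => tK /forall_inP al; rewrite tK /=; apply/andP; split.
      by apply/forallP => g; apply: al; apply: HS.
    by apply/forall_inP => s /setDP[sS _]; apply: al.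
  case/andP => /andP[tK /forallP ag] /forall_inP al1; rewrite tK /=.
  apply/forall_inP => s sS; case: (boolP (s \in O0)) => [/imsetP[g _ ->]| sO].
    exact: ag.
  by apply: al1; rewrite inE sO sS.
apply: GC_trans (GC_step (GC_refl act K) elem); apply: IH1.
- move=> t g; rewrite !inE => /andP[tK /forallP nt]; rewrite HK //=.
  apply/forallP => h; apply/negP => sub.
  have := sactS g^-1 sub; rewrite sactK sactM; apply/negP; exact: nt.
- move=> s g; rewrite !inE => /andP[sO sS]; rewrite HS // andbT.
  apply: contra sO => /imsetP[h _ e]; apply/imsetP; exists (g^-1 * h) => //.
  by rewrite -sactM -e sactK.
- by move=> s g /setDP[sS _]; apply: Hkey.
- by move=> s /setDP[sS _]; apply: Hfs.
- move=> s /setDP[sS sO]; rewrite inE HsK //=; apply/forallP => g.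
  by apply: contra (helper s g sS sO) => sub; apply: subset_trans sub (subsetUr _ _).
- move=> s /setDP[sS sO]; rewrite inE HpK //=; apply/forallP => g; exact: helper.
- by move=> s s' /setDP[sS _] /setDP[s'S _]; apply: Hanti.
- move=> s t /setDP[sS sO]; rewrite inE => /andP[tK /forallP ag] st.
  case: (Hco s t sS tK st) => [->|->|[s' s'S /andP[lt s't]]]; [by constructor 1|by constructor 2|].
  constructor 3; exists s'; last by rewrite lt.
  rewrite inE s'S andbT; apply/negP => /imsetP[g _ e].
  by move: (ag g); rewrite -e s't.
Qed.
End Gen.

Lemma key_lt_aux (a b u v M : nat) : a < b -> u < M -> a * M + u < b * M + v.
Proof. move=> ab uM; nia. Qed.

Lemma ocP (Y : finType) (A0 : {set {set Y}}) (s : {set {set Y}}) :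
  reflect [/\ s != set0, s \subset A0 & {in s &, forall a b : {set Y}, (a \subset b) || (b \subset a)}]
          (s \in order_complex A0).
Proof.
rewrite inE; apply: (iffP idP).
  case/andP => /andP[ne sA] /forall_inP h; split => // a b ha hb.
  exact: (forall_inP (h a ha)).
case=> ne sA h; rewrite ne sA /=; apply/forall_inP => a ha; apply/forall_inP => b hb.
exact: h.
Qed.

Section Gen2.
Local Open Scope group_scope.
Variables (Y : finType) (G : finGroupType) (act : {set Y} -> G -> {set Y}).
Hypothesis H1 : forall x, act x 1 = x.
Hypothesis H2 : forall x g h, act (act x g) h = act x (h * g).
Hypothesis H3 : forall (x y : {set Y}) g, x \subset y -> act x g \subset act y g.
Hypothesis H4 : forall x g, #|act x g| = #|x|.
Variables (A B : {set {set Y}}) (c : {set Y} -> {set Y}).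
Hypothesis HA : forall x g, x \in A -> act x g \in A.
Hypothesis HBc : forall x : {set Y}, (x \in B) = (x \in A) && (c x \subset x).
Hypothesis HcA : forall x : {set Y}, x \in A -> c x \in A.
Hypothesis Hcc : forall x : {set Y}, x \in A -> c (c x) \subset c x.
Hypothesis Hext : forall x : {set Y}, x \in A -> x \subset c x.
Hypothesis Hmono : forall x y : {set Y}, x \in A -> y \in A -> x \subset y -> c x \subset c y.
Hypothesis Hc4' : forall x g, x \in A -> act (c x) g \subset c (act x g).

Lemma BA x : x \in B -> x \in A.
Proof. by rewrite HBc => /andP[]. Qed.
Lemma Hc1 x : x \in A -> c x \in B.
Proof. by move=> xA; rewrite HBc HcA // Hcc. Qed.
Lemma Hc3 x y : x \in A -> y \in B -> x \subset y -> c x \subset y.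
Proof.
move=> xA yB xy; apply: subset_trans (Hmono xA (BA yB) xy) _.
by move: yB; rewrite HBc => /andP[].
Qed.
Lemma Hc4 x g : x \in A -> c (act x g) = act (c x) g.
Proof.
move=> xA; apply/eqP; rewrite eqEsubset Hc4' // andbT.
set z := act x g.
have zA : z \in A by apply: HA.
have h1 : act (c z) g^-1 \subset c x.
  by have := Hc4' g^-1 zA; rewrite /z H2 mulVg H1.
have := H3 g h1; by rewrite H2 mulgV H1.
Qed.
Lemma closed_act x g : x \in B -> act x g \in B.
Proof.
move=> xB; have xA := BA xB; rewrite HBc HA //= Hc4 //.
by apply: H3; move: xB; rewrite HBc => /andP[].
Qed.
Lemma nclosed_act x g : x \in A -> x \notin B -> act x g \notin B.
Proof.
move=> xA; apply: contra => /(closed_act g^-1); by rewrite H2 mulVg H1.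
Qed.

Lemma oc_act (A0 : {set {set Y}}) (HA0 : forall x g, x \in A0 -> act x g \in A0) s g :
  s \in order_complex A0 -> sact act s g \in order_complex A0.
Proof.
case/ocP => ne sA cmp; apply/ocP; split.
- case/set0Pn: ne => x xs; apply/set0Pn; exists (act x g); exact: imset_f.
- by apply/subsetP => y /imsetP[z zs ->]; apply: HA0; apply: (subsetP sA).
- move=> a b /imsetP[x xs ->] /imsetP[y ys ->].
  by case/orP: (cmp x y xs ys) => h; rewrite (H3 g h) ?orbT.
Qed.

Definition isxm (s : {set {set Y}}) x :=
  [&& x \in s, x \notin B & [forall y in s, (y \notin B) ==> (y \subset x)]].
Definition hasN (s : {set {set Y}}) := [exists x in s, x \notin B].
Definition xm (s : {set {set Y}}) := odflt set0 [pick x | isxm s x].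

Lemma xm_spec s : s \in order_complex A -> hasN s -> isxm s (xm s).
Proof.
case/ocP => _ sA cmp /existsP[x0 /andP[x0s x0B]].
have [x hx] : exists x, isxm s x.
  pose P := fun x => (x \in s) && (x \notin B).
  have Px0 : P x0 by apply/andP.
  case: (arg_maxnP (fun x : {set Y} => #|x|) Px0) => x /andP[xs xB] xmax.
  exists x; rewrite /isxm xs xB /=; apply/forall_inP => y ys; apply/implyP => yB.
  case/orP: (cmp x y xs ys) => // xy.
  have hy : P y by rewrite /P ys yB.
  have : x == y by rewrite eqEcard xy; apply: (xmax y hy).
  by move/eqP ->.
rewrite /xm; case: pickP => [y //| /(_ x)]; by rewrite hx.
Qed.

Lemma xm_uniq s x y : isxm s x -> isxm s y -> x = y.
Proof.
case/and3P => xs xB /forall_inP hx; case/and3P => ys yB /forall_inP hy.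
by apply/eqP; rewrite eqEsubset (implyP (hy x xs)) // (implyP (hx y ys)).
Qed.

Definition M := #|{: {set Y}}|.+1.
Lemma card_lt (s : {set {set Y}}) : #|s| < M.
Proof. by rewrite ltnS max_card. Qed.

Definition S := [set s in order_complex A | hasN s && (c (xm s) \notin s)].
Definition fS (s : {set {set Y}}) := c (xm s).
Definition key (s : {set {set Y}}) := #|xm s| * M + #|s|.

Lemma key_lt s s' : #|xm s| < #|xm s'| -> key s < key s'.
Proof. by move=> h; apply: key_lt_aux => //; apply: card_lt. Qed.

Lemma xm_in s : s \in order_complex A -> hasN s -> xm s \in A.
Proof.
move=> so hN; case/ocP: (so) => _ sA _; apply: (subsetP sA).
by case/and3P: (xm_spec so hN).
Qed.

Lemma Sdel t : t \in order_complex A -> hasN t -> t :\ c (xm t) \in S /\ xm (t :\ c (xm t)) = xm t.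
Proof.
move=> tA hN; have := xm_spec tA hN; case/and3P => xt xB /forall_inP hx.
have xA := xm_in tA hN.
have cB := Hc1 xA.
have xne : xm t != c (xm t) by apply: contra xB => /eqP ->.
have xt' : xm t \in t :\ c (xm t) by rewrite !inE xne.
have isx : isxm (t :\ c (xm t)) (xm t).
  rewrite /isxm xt' xB /=; apply/forall_inP => y; rewrite !inE => /andP[_ yt]; exact: hx.
have tdA : t :\ c (xm t) \in order_complex A.
  case/ocP: tA => _ sA cmp; apply/ocP; split.
  - by apply/set0Pn; exists (xm t).
  - exact: subset_trans (subsetDl _ _) sA.
  - by move=> a b; rewrite !inE => /andP[_ ha] /andP[_ hb]; apply: cmp.
have hN' : hasN (t :\ c (xm t)) by apply/existsP; exists (xm t); rewrite xt'.
have e := xm_uniq (xm_spec tdA hN') isx.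
split => //; rewrite inE tdA hN' e /= !inE eqxx.
done.
Qed.

Lemma cmp_cx s b : s \in order_complex A -> hasN s -> b \in s ->
  (c (xm s) \subset b) || (b \subset c (xm s)).
Proof.
move=> so hN bs; have xA := xm_in so hN.
case/and3P: (xm_spec so hN) => xs xB /forall_inP hx.
case/ocP: so => _ sA cmp.
case: (boolP (b \in B)) => bB.
  case/orP: (cmp _ _ xs bs) => h.
    by rewrite (Hc3 xA bB h).
  by rewrite (subset_trans h (Hext xA)) orbT.
by rewrite (subset_trans (implyP (hx b bs) bB) (Hext xA)) orbT.
Qed.

Theorem collapse_closure : G_collapses act (order_complex A) (order_complex B).
Proof.
have HK : forall t g, t \in order_complex A -> sact act t g \in order_complex A.
  by move=> t g; apply: oc_act.
have Sfacts s : s \in S -> [/\ s \in order_complex A, hasN s & c (xm s) \notin s].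
  by rewrite inE => /andP[-> /andP[-> ->]].
have xm_act s g : s \in order_complex A -> hasN s ->
    hasN (sact act s g) /\ xm (sact act s g) = act (xm s) g.
  move=> so hN; have xA := xm_in so hN.
  case/and3P: (xm_spec so hN) => xs xB /forall_inP hx.
  have h1 : act (xm s) g \in sact act s g by apply: imset_f.
  have h2 : act (xm s) g \notin B by apply: nclosed_act.
  have hN' : hasN (sact act s g) by apply/existsP; exists (act (xm s) g); rewrite h1.
  split => //; apply: xm_uniq (xm_spec (HK _ _ so) hN') _.
  rewrite /isxm h1 h2 /=; apply/forall_inP => y /imsetP[z zs ->]; apply/implyP => zB.
  apply: H3; apply: (implyP (hx z zs)); apply: contra zB; exact: closed_act.
have res := @collapse_gen _ _ act H1 H2 #|S| (order_complex A) S key fS (leqnn _) HK.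
have -> : order_complex B = [set t in order_complex A | [forall s in S, ~~ (s \subset t)]].
  apply/setP => t; rewrite inE; apply/idP/idP.
    move=> tB; have tA : t \in order_complex A.
      case/ocP: tB => ne sB cmp; apply/ocP; split => //.
      by apply/subsetP => y /(subsetP sB) /BA.
    rewrite tA /=; apply/forall_inP => s /Sfacts [_ /existsP[y /andP[ys yB]] _].
    apply/negP => /subsetP/(_ y ys) yt.
    by case/ocP: tB => _ /subsetP/(_ y yt) yB'; rewrite yB' in yB.
  case/andP => tA /forall_inP al.
  case: (boolP (hasN t)) => hN.
    by case: (Sdel tA hN) => sS _; move: (al _ sS); rewrite subsetDl.
  case/ocP: tA => ne sA cmp; apply/ocP; split => //.
  apply/subsetP => y yt; move: hN; apply: contraNT => yB.
  by apply/existsP; exists y; rewrite yt.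
apply: res.
- move=> s g /Sfacts[so hN cn]; case: (xm_act s g so hN) => hN' e.
  rewrite inE HK //= hN' /= e Hc4 ?xm_in //.
  by rewrite (mem_sact H1 H2).
- move=> s g /Sfacts[so hN cn]; case: (xm_act s g so hN) => hN' e.
  by rewrite /key e H4 (card_sact H1 H2).
- by move=> s /Sfacts[].
- by move=> s /Sfacts[].
- move=> s /Sfacts[so hN cn]; have xA := xm_in so hN.
  apply/ocP; case/ocP: (so) => ne sA cmp; split.
  + by apply/set0Pn; exists (fS s); rewrite setU11.
  + by rewrite subUset sub1set HcA.
  + move=> a b; rewrite /fS !inE => /orP[/eqP-> | ha] /orP[/eqP-> | hb].
    * by rewrite subxx.
    * exact: cmp_cx.
    * by rewrite orbC; apply: cmp_cx.
    * exact: cmp.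
- move=> s s' /Sfacts[so hN cn] /Sfacts[so' hN' cn'] sub.
  have := xm_spec so hN; case/and3P => xs xB /forall_inP hx.
  have := xm_spec so' hN'; case/and3P => xs' xB' /forall_inP hx'.
  case: (eqVneq (xm s') (xm s)) => [e | ne].
    have s's : s' \subset s.
      apply/subsetP => y ys'; move: (subsetP sub y ys'); rewrite /fS !inE.
      case/orP => // /eqP ey; by rewrite e -ey ys' in cn'.
    case: (eqVneq s' s) => [-> | ns]; first by left.
    right; rewrite /key e ltn_add2l; apply: proper_card.
    by rewrite properEneq ns s's.
  right; apply: key_lt.
  have x's : xm s' \in s.
    move: (subsetP sub _ xs'); rewrite /fS !inE; case/orP => // /eqP ec.
    by move: xB'; rewrite ec Hc1 // xm_in.
  have sub' := implyP (hx _ x's) xB'.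
  by apply: proper_card; rewrite properEneq ne sub'.
- move=> s t /Sfacts[so hN cn] tA st.
  have := xm_spec so hN; case/and3P => xs xB /forall_inP hx.
  have hNt : hasN t by apply/existsP; exists (xm s); rewrite (subsetP st _ xs).
  have := xm_spec tA hNt; case/and3P => xt xBt /forall_inP hxt.
  have xxt : xm s \subset xm t := implyP (hxt _ (subsetP st _ xs)) xB.
  case: (Sdel tA hNt) => s''S e''.
  case: (ltnP (key s) (key (t :\ c (xm t)))) => [lt | le].
    by constructor 3; exists (t :\ c (xm t)); rewrite // lt subsetDl.
  have ex : xm t = xm s.
    apply/eqP; rewrite eq_sym eqEcard xxt /=.
    rewrite leqNgt; apply/negP => lt; move: le; rewrite leqNgt key_lt //.
    by rewrite e''.
  have ss'' : s \subset t :\ c (xm t).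
    apply/subsetP => y ys; rewrite !inE (subsetP st _ ys) andbT.
    by apply: contra cn => /eqP ey; rewrite -ex -ey.
  have es : t :\ c (xm t) = s.
    apply/eqP; rewrite eq_sym eqEcard ss'' /=.
    by move: le; rewrite /key e'' ex leq_add2l.
  case: (boolP (c (xm t) \in t)) => ctt.
    constructor 2; rewrite /fS -ex -{1}es setD1K //.
  constructor 1; rewrite -es; apply/setP => y; rewrite !inE.
  by case: eqP => // ->; rewrite (negbTE ctt).
Qed.
End Gen2.

Section Conc.
Variables (V : finType) (r : nat) (E : {set {set V}}).
Local Notation T := (rtuple V r).
Local Notation edge := (is_edge_tuple E).

Definition cl (F : {set T}) : {set T} := iP [ffun j => proj j F].

Lemma tactE (t : T) g j : tuple_act t g j = t (g j).
Proof. by rewrite ffunE. Qed.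

Lemma tact1 (t : T) : tuple_act t 1%g = t.
Proof. by apply/ffunP => j; rewrite tactE perm1. Qed.
Lemma tactM (t : T) g h : tuple_act (tuple_act t g) h = tuple_act t (h * g)%g.
Proof. by apply/ffunP => j; rewrite !tactE permM. Qed.
Lemma tactK (t : T) g : tuple_act (tuple_act t g) g^-1 = t.
Proof. by rewrite tactM mulVg tact1. Qed.
Lemma tact_inj g : injective (fun t : T => tuple_act t g).
Proof. exact: (@can_inj _ _ _ (fun t : T => tuple_act t g^-1) (fun t => tactK t g)). Qed.

Lemma edge_act (t : T) g : edge t -> edge (tuple_act t g).
Proof.
case/andP => /injectiveP ti tE; apply/andP; split.
  by apply/injectiveP => a b; rewrite !tactE => /ti /perm_inj.
suff -> : [set tuple_act t g j | j in 'I_r] = [set t j | j in 'I_r] by [].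
apply/setP => v; apply/imsetP/imsetP => [[j _ ->]|[j _ ->]].
  by exists (g j); rewrite ?tactE.
by exists (g^-1%g j); rewrite ?tactE ?permKV.
Qed.

Lemma proj_act j (F : {set T}) g : proj j (face_act F g) \subset proj (g j) F.
Proof.
apply/subsetP => v /imsetP[t /imsetP[u uF ->] ->]; rewrite tactE.
exact: imset_f.
Qed.

Lemma fa_1 (F : {set T}) : face_act F 1%g = F.
Proof. by rewrite /face_act (eq_imset _ tact1) imset_id. Qed.
Lemma fa_M (F : {set T}) g h : face_act (face_act F g) h = face_act F (h * g)%g.
Proof. by rewrite /face_act -imset_comp; apply: eq_imset => t /=; rewrite tactM. Qed.
Lemma fa_S (F F' : {set T}) g : F \subset F' -> face_act F g \subset face_act F' g.
Proof. exact: imsetS. Qed.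
Lemma fa_card (F : {set T}) g : #|face_act F g| = #|F|.
Proof. exact: card_imset (@tact_inj g). Qed.

Lemma HA (F : {set T}) g : F \in Bedge_faces r E -> face_act F g \in Bedge_faces r E.
Proof.
rewrite !inE => /and4P[ne /forall_inP ed /forallP dis /forallP last].
apply/and4P; split.
- case/set0Pn: ne => t tF; apply/set0Pn; exists (tuple_act t g); exact: imset_f.
- apply/forall_inP => t /imsetP[u uF ->]; apply: edge_act; exact: ed.
- apply/forallP => j; apply/forallP => k; apply/implyP => jk.
  have gjk : g j != g k by apply: contra jk => /eqP/perm_inj ->.
  move: (forallP (dis (g j)) (g k)); rewrite gjk /= => d.
  exact: disjointWl (proj_act _ _ _) (disjointWr (proj_act _ _ _) d).
- apply/forallP => x; apply/implyP => /forallP hx.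
  have : edge (tuple_act x g^-1).
    apply: (implyP (last _)); apply/forallP => k; rewrite tactE.
    move: (subsetP (proj_act _ _ _) _ (hx (g^-1%g k))); by rewrite permKV.
  by move/(edge_act g); rewrite tactM mulgV tact1.
Qed.

Lemma proj_iP_sub (f : {ffun 'I_r -> {set V}}) j : proj j (iP f) \subset f j.
Proof. by apply/subsetP => v /imsetP[t]; rewrite inE => /forallP ht ->. Qed.

Lemma in_P_iP f : in_P E f -> iP f \in Bedge_faces r E.
Proof.
case/andP => /forallP ne /forallP prod.
have [t ht] : exists t : T, forall j, t j \in f j.
  have [u hu] := @fin_all_exists _ (fun _ => V) (fun j v => v \in f j)
    (fun j => ltac:(case/set0Pn: (ne j) => v hv; exact: (ex_intro _ v hv))).
  by exists [ffun j => u j] => j; rewrite ffunE.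
rewrite inE; apply/and4P; split.
- by apply/set0Pn; exists t; rewrite inE; apply/forallP.
- apply/forall_inP => x; rewrite inE => hx; exact: (implyP (prod x)).
- apply/forallP => j; apply/forallP => k; apply/implyP => jk.
  apply/pred0P => v /=; apply/negP => /andP[/(subsetP (proj_iP_sub f j)) vj /(subsetP (proj_iP_sub f k)) vk].
  pose x : T := [ffun i => if (i == j) || (i == k) then v else t i].
  have : edge x.
    apply: (implyP (prod x)); apply/forallP => i; rewrite ffunE.
    by case: eqP => [->|_] //=; case: eqP => [->|_].
  case/andP => /injectiveP xi _.
  have : x j = x k.
    by rewrite !ffunE !eqxx /= orbT.
  by move/xi/eqP; rewrite (negbTE jk).
- apply/forallP => x; apply/implyP => /forallP hx; apply: (implyP (prod x)).
  by apply/forallP => j; apply: (subsetP (proj_iP_sub f j)).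
Qed.

Lemma cl_iP f : cl (iP f) \subset iP f.
Proof.
apply/subsetP => t; rewrite !inE => /forallP ht; apply/forallP => j.
by move: (ht j); rewrite ffunE => /(subsetP (proj_iP_sub f j)).
Qed.

Lemma in_P_proj F : F \in Bedge_faces r E -> in_P E [ffun j => proj j F].
Proof.
rewrite inE => /and4P[ne _ _ /forallP last]; apply/andP; split.
  apply/forallP => j; rewrite ffunE; case/set0Pn: ne => t tF.
  by apply/set0Pn; exists (t j); apply: imset_f.
apply/forallP => x; apply/implyP => /forallP hx; apply: (implyP (last x)).
by apply/forallP => j; move: (hx j); rewrite ffunE.
Qed.

Lemma Hext (F : {set T}) : F \subset cl F.
Proof.
apply/subsetP => t tF; rewrite inE; apply/forallP => j; rewrite ffunE.
exact: imset_f.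
Qed.

Lemma HBc (F : {set T}) :
  (F \in [set iP f | f in [set f | in_P E f]]) = (F \in Bedge_faces r E) && (cl F \subset F).
Proof.
apply/idP/idP.
  by case/imsetP => f; rewrite inE => fP ->; rewrite in_P_iP // cl_iP.
case/andP => FA sub.
have -> : F = cl F by apply/eqP; rewrite eqEsubset sub Hext.
by apply: imset_f; rewrite inE; apply: in_P_proj.
Qed.

Lemma Hmono (F F' : {set T}) : F \subset F' -> cl F \subset cl F'.
Proof.
move=> sub; apply/subsetP => t; rewrite !inE => /forallP ht; apply/forallP => j.
by move: (ht j); rewrite !ffunE; apply/subsetP/imsetS.
Qed.

Lemma Hc4' (F : {set T}) g : face_act (cl F) g \subset cl (face_act F g).
Proof.
apply/subsetP => t' /imsetP[t]; rewrite inE => /forallP ht ->.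
rewrite inE; apply/forallP => j; rewrite !ffunE.
move: (ht (g j)); rewrite ffunE => /imsetP[u uF ->].
have : tuple_act u g \in face_act F g by apply: imset_f.
by move/(imset_f (fun t : T => t j)); rewrite tactE.
Qed.

End Conc.
Unset Implicit Arguments.

Theorem mainTheorem5 (V : finType) (r : nat) (E : {set {set V}})
  (HE : forall e, e \in E -> #|e| = r) :
  G_collapses (@face_act V r) (@sd_Bedge V r E) (@Delta_iP V r E).
Proof.
rewrite /sd_Bedge /Delta_iP.
have h := (@collapse_closure _ _ (@face_act V r) (@fa_1 V r) (@fa_M V r)
   (fun x y g => @fa_S V r x y g) (@fa_card V r) (Bedge_faces r E)
   [set iP f | f in [set f | in_P E f]] (@cl V r)).

apply: h.
- by move=> x g; apply: HA.
- by move=> x; apply: (HBc E x).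
- by move=> x xA; apply: in_P_iP; apply: in_P_proj.
- by move=> x xA; apply: cl_iP.
- by move=> x _; apply: Hext.
- by move=> x y _ _; apply: Hmono.
- by move=> x g _; apply: Hc4'.
Qed.
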